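(* Let $\mu$ be any positive measure and let $Y$ be a uniformly monotone Banach function space. Then the pair $(L_\infty(\mu),Y)$ has the Bishop-Phelps-Bollobás property for positive operators. Moreover, the function $\eta$ in the definition of this property can be chosen depending only on the modulus of uniform monotonicity of $Y$.
   Context: All spaces are real. For a Banach space $X$, $B_X$ and $S_X$ denote the closed unit ball and unit sphere; $L(X,Y)$ is the space of bounded linear operators with the operator norm. An operator $T$ between Banach lattices is positive if $x\ge0$ implies $Tx\ge 0$. A Banach space $Y$ is a Banach function space on a measure space $(\Omega,\nu)$ if $Y$ is an ideal in the space $L^0(\nu)$ of (a.e. classes of) real measurable functions on $\Omega$ and $|x|\le|y|$ a.e. with $x,y\in Y$ implies $\Vert x\Vert\le\Vert y\Vert$. A Banach lattice $E$ is uniformly monotone if for every $\varepsilon>0$ there is $\delta(\varepsilon)>0$ (the modulus of uniform monotonicity) such that whenever $x\in S_E$, $y\in E$, $x,y\ge0$, and $\Vert x+y\Vert\le 1+\delta(\varepsilon)$, then $\Vert y\Vert\le\varepsilon$. A pair $(X,Y)$ of Banach lattices has the Bishop-Phelps-Bollobás property for positive operators if for every $0<\varepsilon<1$ there exists $0<\eta(\varepsilon)<\varepsilon$ such that for every positive $S\in S_{L(X,Y)}$ and every $x_0\in S_X$ with $\Vert S(x_0)\Vert>1-\eta(\varepsilon)$, there exist $u_0\in S_X$ and a positive operator $T\in S_{L(X,Y)}$ with $\Vert T(u_0)\Vert=1$, $\Vert u_0-x_0\Vert<\varepsilon$ and $\Vert T-S\Vert<\varepsilon$. *)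

(* Defs.v *)
From HB Require Import structures.
From mathcomp Require Import all_boot all_order all_algebra.
From mathcomp Require Import all_classical all_reals all_analysis.
From mathcomp Require Import ess_sup_inf.
Set Implicit Arguments. Unset Strict Implicit. Unset Printing Implicit Defensive.
Import Order.TTheory GRing.Theory Num.Theory.
Import numFieldNormedType.Exports.
Local Open Scope classical_set_scope.
Local Open Scope ring_scope.

Definition ae_le d (T : measurableType d) (R : realType)
  (mu : {measure set T -> \bar R}) (f g : T -> R) : Prop :=
  \forall t \ae mu, f t <= g t.

Definition ae_eq d (T : measurableType d) (R : realType)
  (mu : {measure set T -> \bar R}) (f g : T -> R) : Prop :=
  \forall t \ae mu, f t = g t.

(* L_infty(mu): measurable, essentially bounded functions (representatives) *)
Definition Linf d (T : measurableType d) (R : realType)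
  (mu : {measure set T -> \bar R}) (f : T -> R) : Prop :=
  measurable_fun setT f /\ (ess_sup mu (fun t => (`|f t|)%:E) < +oo)%E.

Definition linf_norm d (T : measurableType d) (R : realType)
  (mu : {measure set T -> \bar R}) (f : T -> R) : R :=
  fine (ess_sup mu (fun t => (`|f t|)%:E)).

Definition banach_function_space d (Om : measurableType d) (R : realType)
  (nu : {measure set Om -> \bar R}) (Y : set (Om -> R)) (N : (Om -> R) -> R)
  : Prop :=
  (forall y, Y y -> measurable_fun setT y) /\
  [/\ Y (fun _ => 0),
      (forall x y, Y x -> Y y -> Y (fun t => x t + y t)),
      (forall (c : R) x, Y x -> Y (fun t => c * x t)) &
      (forall (x y : Om -> R), measurable_fun setT x -> Y y ->
         ae_le nu (fun t => `|x t|) (fun t => `|y t|) -> Y x)] /\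
  [/\ (forall x, Y x -> (N x = 0 <-> ae_eq nu x (fun _ => 0))),
      (forall x y, Y x -> Y y -> N (fun t => x t + y t) <= N x + N y),
      (forall (c : R) x, Y x -> N (fun t => c * x t) = `|c| * N x),
      (forall x y, Y x -> Y y ->
         ae_le nu (fun t => `|x t|) (fun t => `|y t|) -> N x <= N y) &
      (forall u : nat -> Om -> R, (forall n, Y (u n)) ->
        (forall e : R, 0 < e -> exists M, forall m n, (M <= m)%N -> (M <= n)%N ->
            N (fun t => u m t - u n t) < e) ->
        exists y, Y y /\ forall e : R, 0 < e -> exists M, forall n, (M <= n)%N ->
            N (fun t => u n t - y t) < e)].

Definition unif_monotone_with d (Om : measurableType d) (R : realType)
  (nu : {measure set Om -> \bar R}) (Y : set (Om -> R)) (N : (Om -> R) -> R)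
  (delta : R -> R) : Prop :=
  forall eps : R, 0 < eps -> forall x y, Y x -> Y y -> N x = 1 ->
    ae_le nu (fun _ => 0) x -> ae_le nu (fun _ => 0) y ->
    N (fun t => x t + y t) <= 1 + delta eps -> N y <= eps.

(* S is a bounded linear operator L_infty(mu) -> Y (acting on representatives,
   compatible with a.e. equality) *)
Definition bounded_op d (T : measurableType d) d' (Om : measurableType d')
  (R : realType) (mu : {measure set T -> \bar R}) (nu : {measure set Om -> \bar R})
  (Y : set (Om -> R)) (N : (Om -> R) -> R) (S : (T -> R) -> (Om -> R)) : Prop :=
  [/\ (forall f, Linf mu f -> Y (S f)),
      (forall f g, Linf mu f -> Linf mu g -> ae_eq mu f g -> ae_eq nu (S f) (S g)),
      (forall (a : R) f g, Linf mu f -> Linf mu g ->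
         ae_eq nu (S (fun t => a * f t + g t)) (fun w => a * S f w + S g w)) &
      (exists C : R, forall f, Linf mu f -> N (S f) <= C * linf_norm mu f)].

Definition positive_op d (T : measurableType d) d' (Om : measurableType d')
  (R : realType) (mu : {measure set T -> \bar R}) (nu : {measure set Om -> \bar R})
  (S : (T -> R) -> (Om -> R)) : Prop :=
  forall f, Linf mu f -> ae_le mu (fun _ => 0) f -> ae_le nu (fun _ => 0) (S f).

Definition op_norm d (T : measurableType d) d' (Om : measurableType d')
  (R : realType) (mu : {measure set T -> \bar R})
  (N : (Om -> R) -> R) (S : (T -> R) -> (Om -> R)) : R :=
  sup [set N (S f) | f in [set f | Linf mu f /\ linf_norm mu f <= 1]].

Definition BPBp_pos_with d (T : measurableType d) d' (Om : measurableType d')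
  (R : realType) (mu : {measure set T -> \bar R}) (nu : {measure set Om -> \bar R})
  (Y : set (Om -> R)) (N : (Om -> R) -> R) (eta : R -> R) : Prop :=
  forall eps : R, 0 < eps < 1 ->
  forall (S : (T -> R) -> (Om -> R)) (x0 : T -> R),
    bounded_op mu nu Y N S -> positive_op mu nu S -> op_norm mu N S = 1 ->
    Linf mu x0 -> linf_norm mu x0 = 1 ->
    N (S x0) > 1 - eta eps ->
    exists (u0 : T -> R) (Top : (T -> R) -> (Om -> R)),
      [/\ Linf mu u0, linf_norm mu u0 = 1,
          bounded_op mu nu Y N Top, positive_op mu nu Top & op_norm mu N Top = 1] /\
      [/\ N (Top u0) = 1,
          linf_norm mu (fun t => u0 t - x0 t) < eps &
          op_norm mu N (fun f w => Top f w - S f w) < eps].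

(* Main.v *)
Require Import Defs.
From HB Require Import structures.
From mathcomp Require Import all_boot all_order all_algebra.
From mathcomp Require Import all_classical all_reals all_analysis.
From mathcomp Require Import ess_sup_inf measurable_realfun.
From mathcomp Require Import lra ring.
Set Implicit Arguments. Unset Strict Implicit. Unset Printing Implicit Defensive.
Import Order.TTheory GRing.Theory Num.Theory.
Import numFieldNormedType.Exports.
Local Open Scope classical_set_scope.
Local Open Scope ring_scope.

Section AeLemmas.
Context (R : realType) d (T : measurableType d) (mu : {measure set T -> \bar R}).
Lemma aeI (P Q : T -> Prop) : (\forall t \ae mu, P t) ->
  (\forall t \ae mu, Q t) -> \forall t \ae mu, P t /\ Q t.
Proof. by move=> H1 H2; apply: filterS2 H1 H2. Qed.
End AeLemmas.

Section LinfLemmas.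
Context (R : realType) d (T : measurableType d) (mu : {measure set T -> \bar R}).
Implicit Types (f g h : T -> R) (c : R).

Lemma ae_false_all (P : T -> Prop) :
  (\forall t \ae mu, False) -> \forall t \ae mu, P t.
Proof. by apply: filterS. Qed.

Lemma linf_ae f : Linf mu f -> \forall t \ae mu, `|f t| <= linf_norm mu f.
Proof.
move=> [mf fin]; have := ess_sup_ge mu (fun t => (`|f t|)%:E).
rewrite /linf_norm; move: fin.
case: (ess_sup mu (fun t => (`|f t|)%:E)) => [r| |] //= _.
by move=> H; apply: ae_false_all; apply: filterS H => t; rewrite leeNy_eq.
Qed.

Lemma linf_ge0 f : 0 <= linf_norm mu f.
Proof.
rewrite /linf_norm.
have := ess_sup_ge mu (fun t => (`|f t|)%:E).
case E: (ess_sup mu (fun t => (`|f t|)%:E)) => [r| |] //= H.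
rewrite leNgt; apply/negP => r0.
have : (ess_sup mu (fun t => (`|f t|)%:E) <= -oo)%E.
  apply/ess_supP; apply: ae_false_all; apply: filterS H => t.
  rewrite lee_fin => h; have := le_trans (normr_ge0 _) h; by rewrite leNgt r0.
by rewrite E.
Qed.

Lemma linf_le f c : 0 <= c -> (\forall t \ae mu, `|f t| <= c) ->
  linf_norm mu f <= c.
Proof.
move=> c0 H; have : (ess_sup mu (fun t => (`|f t|)%:E) <= c%:E)%E.
  by apply/ess_supP; apply: filterS H => t; rewrite lee_fin.
rewrite /linf_norm; case: (ess_sup mu _) => [r| |] //=.
Qed.

Lemma Linf_intro f c : measurable_fun setT f ->
  (\forall t \ae mu, `|f t| <= c) -> Linf mu f.
Proof.
move=> mf H; split => //.
have : (ess_sup mu (fun t => (`|f t|)%:E) <= c%:E)%E.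
  by apply/ess_supP; apply: filterS H => t; rewrite lee_fin.
by move=> /le_lt_trans; apply; rewrite ltey.
Qed.

Lemma Linf_meas f : Linf mu f -> measurable_fun setT f.
Proof. by case. Qed.

Lemma Linf_lin (a : R) f g : Linf mu f -> Linf mu g ->
  Linf mu (fun t => a * f t + g t).
Proof.
move=> hf hg; apply: (@Linf_intro _ (`|a| * linf_norm mu f + linf_norm mu g)).
  exact: (measurable_funD (measurable_funM (measurable_cst a) (Linf_meas hf)) (Linf_meas hg)).
have H1 := linf_ae hf; have H2 := linf_ae hg.
apply: filterS (aeI H1 H2) => t [h1 h2].
apply: (le_trans (ler_normD _ _)); rewrite normrM; apply: lerD => //.
exact: ler_wpM2l.
Qed.

Lemma Linf_cst (c : R) : Linf mu (fun _ => c).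
Proof. by apply: (@Linf_intro _ `|c|) => //; apply: aeW. Qed.

Lemma Linf_mul f h : Linf mu f -> measurable_fun setT h ->
  (forall t, `|h t| <= 1) -> Linf mu (fun t => f t * h t).
Proof.
move=> hf mh h1; apply: (@Linf_intro _ (linf_norm mu f)).
  exact: (measurable_funM (Linf_meas hf) mh).
apply: filterS (linf_ae hf) => t ft.
rewrite normrM -[X in _ <= X]mulr1; apply: ler_pM => //.
Qed.

End LinfLemmas.

Section YLemmas.
Context (R : realType) d' (Om : measurableType d') (nu : {measure set Om -> \bar R})
  (Y : set (Om -> R)) (N : (Om -> R) -> R).
Hypothesis hY : banach_function_space nu Y N.
Implicit Types (x y h : Om -> R).

Lemma Y_meas y : Y y -> measurable_fun setT y.
Proof. by case: hY => + _; apply. Qed.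
Lemma Y_add x y : Y x -> Y y -> Y (fun t => x t + y t).
Proof. by case: hY => _ [[]] _ + _ _ _; apply. Qed.
Lemma Y_scal (c : R) y : Y y -> Y (fun t => c * y t).
Proof. by case: hY => _ [[]] _ _ + _ _; apply. Qed.
Lemma Y_ideal x y : measurable_fun setT x -> Y y ->
  (\forall t \ae nu, `|x t| <= `|y t|) -> Y x.
Proof. by case: hY => _ [[]] _ _ _ + _; apply. Qed.
Lemma N_tri x y : Y x -> Y y -> N (fun t => x t + y t) <= N x + N y.
Proof. by case: hY => _ [_ []] _ + _ _ _; apply. Qed.
Lemma N_scal (c : R) y : Y y -> N (fun t => c * y t) = `|c| * N y.
Proof. by case: hY => _ [_ []] _ _ + _ _; apply. Qed.
Lemma N_mono x y : Y x -> Y y ->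
  (\forall t \ae nu, `|x t| <= `|y t|) -> N x <= N y.
Proof. by case: hY => _ [_ []] _ _ _ + _; apply. Qed.
Lemma Y0 : Y (fun _ => 0).
Proof. by case: hY => _ [[]]. Qed.
Lemma N_zero : N (fun _ => 0) = 0.
Proof.
case: hY => _ [_ [+ _ _ _ _]] => /(_ _ Y0) [_ ->] //.
by apply: aeW.
Qed.
Lemma N_ge0 y : Y y -> 0 <= N y.
Proof.
move=> Yy; rewrite -N_zero; apply: N_mono => //; first exact: Y0.
by apply: aeW => t; rewrite normr0.
Qed.
Lemma N_mono' x y : measurable_fun setT x -> Y y ->
  (\forall t \ae nu, `|x t| <= `|y t|) -> N x <= N y.
Proof. by move=> mx Yy H; apply: N_mono => //; exact: (Y_ideal mx Yy H). Qed.
Lemma N_eq x y : Y x -> Y y -> (\forall t \ae nu, x t = y t) -> N x = N y.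
Proof.
move=> Yx Yy H; apply/eqP; rewrite eq_le; apply/andP; split; apply: N_mono => //;
  by apply: filterS H => t ->.
Qed.
Lemma Y_abs y : Y y -> Y (fun t => `|y t|).
Proof.
move=> Yy; apply: (Y_ideal _ Yy); last by apply: aeW => t; rewrite normr_id.
by apply: measurableT_comp => //; exact: Y_meas.
Qed.
Lemma N_abs y : Y y -> N (fun t => `|y t|) = N y.
Proof.
move=> Yy; apply/eqP; rewrite eq_le; apply/andP; split; apply: N_mono => //;
  try exact: Y_abs; by apply: aeW => t; rewrite normr_id.
Qed.
Lemma Y_mulb h y : measurable_fun setT h -> (forall t, `|h t| <= 1) -> Y y ->
  Y (fun t => h t * y t).
Proof.
move=> mh h1 Yy; apply: (Y_ideal _ Yy).
  exact: (measurable_funM mh (Y_meas Yy)).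
apply: aeW => t; rewrite normrM -[X in _ <= X]mul1r; apply: ler_pM => //.
Qed.
End YLemmas.

Section PosOp.
Context (R : realType) d (T : measurableType d) (mu : {measure set T -> \bar R})
  d' (Om : measurableType d') (nu : {measure set Om -> \bar R})
  (Y : set (Om -> R)) (N : (Om -> R) -> R).
Hypothesis hY : banach_function_space nu Y N.
Variable S : (T -> R) -> (Om -> R).
Hypothesis SY : forall f, Linf mu f -> Y (S f).
Hypothesis Slin : forall (a : R) f g, Linf mu f -> Linf mu g ->
  Defs.ae_eq nu (S (fun t => a * f t + g t)) (fun w => a * S f w + S g w).
Hypothesis Spos : positive_op mu nu S.
Implicit Types (f g h : T -> R).

Lemma S_ext f g : (forall t, f t = g t) -> S f = S g.
Proof. by move=> H; congr S; apply: funext. Qed.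

Lemma S0 : \forall w \ae nu, S (fun _ => 0) w = 0.
Proof.
have := Slin 1 (Linf_cst mu 0) (Linf_cst mu 0).
rewrite (@S_ext (fun _ => 1 * 0 + 0) (fun _ => 0)); last by move=> t; rewrite mulr0 addr0.
by apply: filterS => w; rewrite mul1r => h; lra.
Qed.

Lemma S_add f g : Linf mu f -> Linf mu g ->
  \forall w \ae nu, S (fun t => f t + g t) w = S f w + S g w.
Proof.
move=> hf hg; have := Slin 1 hf hg.
rewrite (@S_ext (fun t => 1 * f t + g t) (fun t => f t + g t)); last by move=> t; rewrite mul1r.
by apply: filterS => w ->; rewrite mul1r.
Qed.

Lemma S_scale (a : R) f : Linf mu f ->
  \forall w \ae nu, S (fun t => a * f t) w = a * S f w.
Proof.
move=> hf; have := Slin a hf (Linf_cst mu 0).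
rewrite (@S_ext (fun t => a * f t + 0) (fun t => a * f t)); last by move=> t; rewrite addr0.
move=> H; apply: filterS (aeI H S0) => w [-> ->]; by rewrite addr0.
Qed.

Lemma S_le f h : Linf mu f -> Linf mu h -> (\forall t \ae mu, f t <= h t) ->
  \forall w \ae nu, S f w <= S h w.
Proof.
move=> hf hh H.
have hk := Linf_lin (-1) hf hh.
have := Spos hk; rewrite /ae_le.
have : \forall t \ae mu, 0 <= -1 * f t + h t.
  by apply: filterS H => t; rewrite mulN1r addrC subr_ge0.
move=> /[swap] /[apply] H2.
apply: filterS (aeI H2 (Slin (-1) hf hh)) => w [h1 h2].
by move: h1; rewrite h2 mulN1r addrC subr_ge0.
Qed.

Lemma S_abs f h : Linf mu f -> Linf mu h -> (\forall t \ae mu, `|f t| <= h t) ->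
  \forall w \ae nu, `|S f w| <= S h w.
Proof.
move=> hf hh H.
have H1 : \forall w \ae nu, S f w <= S h w.
  by apply: S_le => //; apply: filterS H => t; apply: le_trans; exact: ler_norm.
have hk := Linf_lin 1 hf hh.
have := Spos hk; rewrite /ae_le.
have : \forall t \ae mu, 0 <= 1 * f t + h t.
  apply: filterS H => t; rewrite mul1r => /ler_normlP [+ _].
  by rewrite -subr_ge0 opprK addrC.
move=> /[swap] /[apply] H2.
apply: filterS (aeI H1 (aeI H2 (Slin 1 hf hh))) => w [h1 [h2 h3]].
move: h2; rewrite h3 mul1r => h2.
rewrite ler_norml h1 andbT; lra.
Qed.

Lemma S_between f h (a b : R) : Linf mu f -> Linf mu h ->
  (\forall t \ae mu, a * h t <= f t /\ f t <= b * h t) ->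
  \forall w \ae nu, a * S h w <= S f w /\ S f w <= b * S h w.
Proof.
move=> hf hh H.
have ha := Linf_lin a hh (Linf_cst mu 0).
have hb := Linf_lin b hh (Linf_cst mu 0).
have H1 : \forall w \ae nu, S (fun t => a * h t + 0) w <= S f w.
  by apply: S_le ha hf _; apply: filterS H => t [p q]; rewrite addr0.
have H2 : \forall w \ae nu, S f w <= S (fun t => b * h t + 0) w.
  by apply: S_le hf hb _; apply: filterS H => t [p q]; rewrite addr0.
have E1 := Slin a hh (Linf_cst mu 0).
have E2 := Slin b hh (Linf_cst mu 0).
apply: filterS (aeI H1 (aeI H2 (aeI E1 (aeI E2 S0)))) => w [h1 [h2 [e1 [e2 z]]]].
by move: h1 h2; rewrite e1 e2 z !addr0.
Qed.

Lemma S_bound f : Linf mu f -> N (S f) <= linf_norm mu f * N (S (fun _ => 1)).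
Proof.
move=> hf.
have h1 := Linf_cst mu 1.
have H := S_abs hf (Linf_cst mu (linf_norm mu f)) (linf_ae hf).
have E := S_scale (linf_norm mu f) h1.
rewrite (@S_ext (fun _ => linf_norm mu f) (fun t => linf_norm mu f * 1)) in H; last by move=> t; rewrite mulr1.
have Yb := Y_scal hY (linf_norm mu f) (SY h1).
rewrite -(ger0_norm (linf_ge0 mu f)) -(N_scal hY _ (SY h1)).
apply: (N_mono hY (SY hf) Yb).
apply: filterS (aeI H E) => w [p q]; rewrite -q; apply: (le_trans p); exact: ler_norm.
Qed.

Lemma op_norm_pos : op_norm mu N S = N (S (fun _ => 1)).
Proof.
have h1 := Linf_cst mu 1.
have l1 : linf_norm mu (fun _ => 1) <= 1.
  by apply: linf_le => //; apply: aeW => t; rewrite normr1.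
have mem : [set N (S f) | f in [set f | Linf mu f /\ linf_norm mu f <= 1]]
   (N (S (fun _ => 1))) by exists (fun _ => 1).
have ub : ubound [set N (S f) | f in [set f | Linf mu f /\ linf_norm mu f <= 1]]
   (N (S (fun _ => 1))).
  move=> _ [f [hf lf] <-]; apply: (le_trans (S_bound hf)).
  rewrite -[X in _ <= X]mul1r; apply: ler_wpM2r => //; exact: (N_ge0 hY (SY h1)).
rewrite /op_norm; apply/eqP; rewrite eq_le; apply/andP; split.
  by apply: ge_sup => //; exists (N (S (fun _ => 1))).
by apply: ub_le_sup => //; exists (N (S (fun _ => 1))).
Qed.

End PosOp.

Definition eta_of (R : realType) (delta : R -> R) (eps : R) : R :=
  Num.min (eps / 2) (delta (eps ^+ 2 / 8) / (1 + delta (eps ^+ 2 / 8))).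

Section Main.
Context (R : realType) (delta : R -> R) d (T : measurableType d)
  (mu : {measure set T -> \bar R})
  d' (Om : measurableType d') (nu : {measure set Om -> \bar R})
  (Y : set (Om -> R)) (N : (Om -> R) -> R).
Hypothesis hY : banach_function_space nu Y N.
Hypothesis hUM : unif_monotone_with nu Y N delta.
Variable eps : R.
Hypothesis heps : 0 < eps < 1.
Hypothesis hdel : 0 < delta (eps ^+ 2 / 8).
Variable S : (T -> R) -> (Om -> R).
Hypothesis SY : forall f, Linf mu f -> Y (S f).
Hypothesis Scomp : forall f g, Linf mu f -> Linf mu g -> Defs.ae_eq mu f g ->
  Defs.ae_eq nu (S f) (S g).
Hypothesis Slin : forall (a : R) f g, Linf mu f -> Linf mu g ->
  Defs.ae_eq nu (S (fun t => a * f t + g t)) (fun w => a * S f w + S g w).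
Hypothesis Spos : positive_op mu nu S.
Hypothesis hnorm : op_norm mu N S = 1.
Variable x0 : T -> R.
Hypothesis hx0 : Linf mu x0.
Hypothesis nx0 : linf_norm mu x0 = 1.
Hypothesis hSx0 : 1 - eta_of delta eps < N (S x0).
Implicit Types (f g h : T -> R).

Definition e1 := eps / 2.
Lemma e1_gt0 : 0 < e1. Proof. rewrite /e1; case/andP: heps => ? ?; lra. Qed.
Lemma e1_lt_eps : e1 < eps. Proof. rewrite /e1; case/andP: heps => ? ?; lra. Qed.
Lemma e1_lt : e1 < 1 / 2. Proof. rewrite /e1; case/andP: heps => ? ?; lra. Qed.

Definition ip t := if 1 - e1 < x0 t then 1 else 0 : R.
Definition im t := if x0 t < e1 - 1 then 1 else 0 : R.
Definition iz t := 1 - ip t - im t.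

Lemma i_cases t :
  [/\ ip t = 1, im t = 0, iz t = 0 & 1 - e1 < x0 t] \/
  [/\ ip t = 0, im t = 1, iz t = 0 & x0 t < e1 - 1] \/
  [/\ ip t = 0, im t = 0, iz t = 1 & e1 - 1 <= x0 t <= 1 - e1].
Proof.
have h0 := e1_gt0; have h1 := e1_lt.
rewrite /iz /ip /im; case: ltP => a; case: ltP => b.
- exfalso; lra.
- by left; split; try lra.
- by right; left; split; try lra.
- by right; right; split; try lra.
Qed.

Lemma ip_meas : measurable_fun setT ip.
Proof.
apply: measurable_fun_ifT => //.
exact: (measurable_fun_ltr (measurable_cst (1 - e1)) (Linf_meas hx0)).
Qed.
Lemma im_meas : measurable_fun setT im.
Proof.
apply: measurable_fun_ifT => //.
exact: (measurable_fun_ltr (Linf_meas hx0) (measurable_cst (e1 - 1))).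
Qed.
Lemma iz_meas : measurable_fun setT iz.
Proof.
exact: (measurable_funB (measurable_funB (measurable_cst (1 : R)) ip_meas) im_meas).
Qed.

Lemma Linf_ind h : measurable_fun setT h -> (forall t, `|h t| <= 1) -> Linf mu h.
Proof. by move=> mh hb; apply: (Linf_intro (c := 1)) => //; apply: aeW. Qed.

Lemma ip_b t : `|ip t| <= 1.
Proof. by case: (i_cases t) => [[-> _ _ _]|[[-> _ _ _]|[-> _ _ _]]]; rewrite ?normr0 ?normr1. Qed.
Lemma im_b t : `|im t| <= 1.
Proof. by case: (i_cases t) => [[_ -> _ _]|[[_ -> _ _]|[_ -> _ _]]]; rewrite ?normr0 ?normr1. Qed.
Lemma iz_b t : `|iz t| <= 1.
Proof. by case: (i_cases t) => [[_ _ -> _]|[[_ _ -> _]|[_ _ -> _]]]; rewrite ?normr0 ?normr1. Qed.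

Lemma Lip : Linf mu ip. Proof. exact: Linf_ind ip_meas ip_b. Qed.
Lemma Lim : Linf mu im. Proof. exact: Linf_ind im_meas im_b. Qed.
Lemma Liz : Linf mu iz. Proof. exact: Linf_ind iz_meas iz_b. Qed.

Lemma x0_b : \forall t \ae mu, `|x0 t| <= 1.
Proof. by rewrite -nx0; exact: linf_ae. Qed.


Lemma Sx f1 f2 : (forall t, f1 t = f2 t) -> S f1 = S f2.
Proof. exact: S_ext. Qed.

Definition g := S x0.
Definition sp := S ip.
Definition sm := S im.
Definition sz := S iz.
Definition s1 := S (fun _ => 1).
Definition jB w := if 0 <= g w then 1 else 0 : R.
Definition P1 w := jB w * sp w + (1 - jB w) * sm w.
Definition D w := jB w * sm w + (1 - jB w) * sp w + sz w.

Lemma L1 : Linf mu (fun _ => 1 : R). Proof. exact: Linf_cst. Qed.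
Lemma Yg : Y g. Proof. exact: SY hx0. Qed.
Lemma Ysp : Y sp. Proof. exact: SY Lip. Qed.
Lemma Ysm : Y sm. Proof. exact: SY Lim. Qed.
Lemma Ysz : Y sz. Proof. exact: SY Liz. Qed.
Lemma Ys1 : Y s1. Proof. exact: SY L1. Qed.

Lemma jB_cases w : (jB w = 1 /\ 0 <= g w) \/ (jB w = 0 /\ g w < 0).
Proof. by rewrite /jB; case: leP => h; [left|right]. Qed.
Lemma jB_meas : measurable_fun setT jB.
Proof.
apply: measurable_fun_ifT => //.
exact: (measurable_fun_ler (measurable_cst (0 : R)) (Y_meas hY Yg)).
Qed.
Lemma jBc_meas : measurable_fun setT (fun w => 1 - jB w).
Proof. exact: (measurable_funB (measurable_cst (1 : R)) jB_meas). Qed.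
Lemma jB_b w : `|jB w| <= 1.
Proof. by case: (jB_cases w) => [[-> _]|[-> _]]; rewrite ?normr0 ?normr1. Qed.
Lemma jBc_b w : `|1 - jB w| <= 1.
Proof. by case: (jB_cases w) => [[-> _]|[-> _]]; rewrite ?subrr ?subr0 ?normr0 ?normr1. Qed.

Lemma YP1 : Y P1.
Proof. exact: (Y_add hY (Y_mulb hY jB_meas jB_b Ysp) (Y_mulb hY jBc_meas jBc_b Ysm)). Qed.
Lemma YD : Y D.
Proof.
exact: (Y_add hY (Y_add hY (Y_mulb hY jB_meas jB_b Ysm) (Y_mulb hY jBc_meas jBc_b Ysp)) Ysz).
Qed.

Lemma ind_pos h : Linf mu h -> (forall t, 0 <= h t) -> \forall w \ae nu, 0 <= S h w.
Proof. by move=> Lh hp; apply: Spos => //; apply: aeW. Qed.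
Lemma ip_ge0 t : 0 <= ip t.
Proof. by case: (i_cases t) => [[-> _ _ _]|[[-> _ _ _]|[-> _ _ _]]]. Qed.
Lemma im_ge0 t : 0 <= im t.
Proof. by case: (i_cases t) => [[_ -> _ _]|[[_ -> _ _]|[_ -> _ _]]]. Qed.
Lemma iz_ge0 t : 0 <= iz t.
Proof. by case: (i_cases t) => [[_ _ -> _]|[[_ _ -> _]|[_ _ -> _]]]. Qed.

Lemma pos3 : \forall w \ae nu, [/\ 0 <= sp w, 0 <= sm w & 0 <= sz w].
Proof.
apply: filterS (aeI (ind_pos Lip ip_ge0) (aeI (ind_pos Lim im_ge0) (ind_pos Liz iz_ge0))).
by move=> w [a [b c]]; split.
Qed.

Lemma decomp f : Linf mu f -> \forall w \ae nu,
  S f w = S (fun t => f t * ip t) w + S (fun t => f t * im t) w +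
          S (fun t => f t * iz t) w.
Proof.
move=> hf.
have Lp := Linf_mul hf ip_meas ip_b.
have Lm := Linf_mul hf im_meas im_b.
have Lz := Linf_mul hf iz_meas iz_b.
have E := S_add Slin Lp (Linf_lin 1 Lm Lz).
have E2 := S_add Slin Lm Lz.
rewrite (@Sx (fun t => f t * ip t + (1 * (f t * im t) + f t * iz t)) f) in E; last first.
  by move=> t; rewrite /iz; ring.
rewrite (@Sx (fun t => 1 * (f t * im t) + f t * iz t) (fun t => f t * im t + f t * iz t)) in E; last first.
  by move=> t; rewrite mul1r.
by apply: filterS (aeI E E2) => w [-> ->]; rewrite addrA.
Qed.

Lemma sum1 : \forall w \ae nu, s1 w = sp w + sm w + sz w.
Proof.
have := decomp L1; rewrite /s1 /sp /sm /sz.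
rewrite (@Sx (fun t => 1 * ip t) ip); last by move=> t; rewrite mul1r.
rewrite (@Sx (fun t => 1 * im t) im); last by move=> t; rewrite mul1r.
by rewrite (@Sx (fun t => 1 * iz t) iz); last by move=> t; rewrite mul1r.
Qed.



Lemma Hxp : \forall w \ae nu, (1 - e1) * sp w <= S (fun t => x0 t * ip t) w /\
   S (fun t => x0 t * ip t) w <= 1 * sp w.
Proof.
apply: (S_between Slin Spos (Linf_mul hx0 ip_meas ip_b) Lip).
apply: filterS x0_b => t /ler_normlP [? ?].
have := e1_gt0; have := e1_lt.
case: (i_cases t) => [[E1 E2 E3 ?]|[[E1 E2 E3 ?]|[E1 E2 E3 /andP[? ?]]]] => ? ?;
  rewrite ?E1 ?E2 ?E3 ?mulr1 ?mulr0; split; lra.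
Qed.
Lemma Hxm : \forall w \ae nu, (-1) * sm w <= S (fun t => x0 t * im t) w /\
   S (fun t => x0 t * im t) w <= (e1 - 1) * sm w.
Proof.
apply: (S_between Slin Spos (Linf_mul hx0 im_meas im_b) Lim).
apply: filterS x0_b => t /ler_normlP [? ?].
have := e1_gt0; have := e1_lt.
case: (i_cases t) => [[E1 E2 E3 ?]|[[E1 E2 E3 ?]|[E1 E2 E3 /andP[? ?]]]] => ? ?;
  rewrite ?E1 ?E2 ?E3 ?mulr1 ?mulr0; split; lra.
Qed.
Lemma Hxz : \forall w \ae nu, (e1 - 1) * sz w <= S (fun t => x0 t * iz t) w /\
   S (fun t => x0 t * iz t) w <= (1 - e1) * sz w.
Proof.
apply: (S_between Slin Spos (Linf_mul hx0 iz_meas iz_b) Liz).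
apply: filterS x0_b => t /ler_normlP [? ?].
have := e1_gt0; have := e1_lt.
case: (i_cases t) => [[E1 E2 E3 ?]|[[E1 E2 E3 ?]|[E1 E2 E3 /andP[? ?]]]] => ? ?;
  rewrite ?E1 ?E2 ?E3 ?mulr1 ?mulr0; split; lra.
Qed.

Lemma key : \forall w \ae nu, [/\ `|g w| + e1 * D w <= s1 w, 0 <= D w,
   0 <= P1 w & P1 w + D w = s1 w].
Proof.
apply: filterS (aeI (decomp hx0) (aeI Hxp (aeI Hxm (aeI Hxz (aeI pos3 sum1))))).
move=> w [dg [[p1 p2] [[m1 m2] [[z1 z2] [[q1 q2 q3] su]]]]].
rewrite /D /P1 su; rewrite /g dg.
have := e1_gt0; have := e1_lt => ? ?.
case: (jB_cases w) => [[-> hg]|[-> hg]]; rewrite /g dg in hg.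
- rewrite ger0_norm //; split; nra.
- rewrite ltr0_norm //; split; nra.
Qed.


Lemma Ns1 : N s1 = 1.
Proof. by rewrite /s1 -(op_norm_pos hY SY Slin Spos) hnorm. Qed.

Lemma Ng_le : N g <= 1.
Proof.
rewrite -Ns1; apply: (N_mono hY Yg Ys1); apply: filterS key => w [k1 k2 _ _].
apply: le_trans (ler_norm _); apply: le_trans k1.
by rewrite lerDl; apply: mulr_ge0 => //; exact: ltW e1_gt0.
Qed.

Lemma NP1_le : N P1 <= 1.
Proof.
rewrite -Ns1; apply: (N_mono hY YP1 Ys1); apply: filterS key => w [k1 k2 k3 k4].
rewrite ger0_norm //; apply: le_trans (ler_norm _); rewrite -k4; lra.
Qed.

Lemma NP1D : 1 <= N P1 + N D.
Proof.
rewrite -Ns1 (N_eq hY Ys1 (Y_add hY YP1 YD)); first exact: (N_tri hY YP1 YD).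
by apply: filterS key => w [_ _ _ ->].
Qed.

Lemma eta_le1 : eta_of delta eps <= eps / 2.
Proof. by rewrite /eta_of ge_min lexx. Qed.
Lemma eta_le2 : (1 + delta (eps ^+ 2 / 8)) * eta_of delta eps <= delta (eps ^+ 2 / 8).
Proof.
have h : eta_of delta eps <= delta (eps ^+ 2 / 8) / (1 + delta (eps ^+ 2 / 8)).
  by rewrite /eta_of ge_min lexx orbT.
by rewrite mulrC -ler_pdivlMr // addr_gt0.
Qed.

Lemma ND_bound : N D <= eps / 4.
Proof.
have he := eta_le1; have he2 := eta_le2; have hd := hdel.
have [e0 e1'] : 0 < eps /\ eps < 1 by case/andP: heps.
have Ng_pos : 0 < N g by move: hSx0; rewrite /g; lra.
have Ngl := Ng_le.
set k := (N g)^-1.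
have hk : k * N g = 1 by rewrite /k mulVf // gt_eqF.
have k0 : 0 <= k by rewrite /k invr_ge0 ltW.
have k1 : 1 <= k by nra.
have kd : k <= 1 + delta (eps ^+ 2 / 8).
  move: hSx0; rewrite -/g => hS; nra.
have YD0 := YD.
have Yx := Y_scal hY k (Y_abs hY Yg).
have Yy := Y_scal hY k (Y_scal hY e1 YD).
have Yin := Y_add hY (Y_abs hY Yg) (Y_scal hY e1 YD).
have e2p : 0 < eps ^+ 2 / 8 by apply: divr_gt0 => //; apply: exprn_gt0.
have := hUM e2p Yx Yy.
rewrite (N_scal hY _ (Y_abs hY Yg)) (N_abs hY Yg) ger0_norm // hk.
rewrite (N_scal hY _ (Y_scal hY e1 YD)) (N_scal hY _ YD) ger0_norm // ger0_norm;
  last exact: ltW e1_gt0.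
have -> : (fun t => k * `|g t| + k * (e1 * D t)) = (fun t => k * (`|g t| + e1 * D t)).
  by apply: funext => t /=; ring.
rewrite (N_scal hY _ Yin) ger0_norm //.
have Nin : N (fun t => `|g t| + e1 * D t) <= 1.
  rewrite -Ns1; apply: (N_mono hY Yin Ys1); apply: filterS key => w [w1 w2 _ _].
  rewrite ger0_norm; first exact: le_trans w1 (ler_norm _).
  by apply: addr_ge0 => //; apply: mulr_ge0 => //; exact: ltW e1_gt0.
have NDp := N_ge0 hY YD.
have Ngin := N_ge0 hY Yin.
move=> /(_ erefl).
have H1 : ae_le nu (fun _ => 0) (fun t => k * `|g t|).
  by apply: aeW => t; apply: mulr_ge0.
have H2 : ae_le nu (fun _ => 0) (fun t => k * (e1 * D t)).
  apply: filterS key => w [_ w2 _ _]; apply: mulr_ge0 => //; apply: mulr_ge0 => //.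
  exact: ltW e1_gt0.
move=> /(_ H1 H2).
have : k * N (fun t => `|g t| + e1 * D t) <= 1 + delta (eps ^+ 2 / 8).
  by apply: le_trans kd; rewrite -[X in _ <= X]mulr1; apply: ler_wpM2l.
move=> /[swap] /[apply].
move=> H.
have H' : e1 * N D <= eps ^+ 2 / 8.
  apply: le_trans H; rewrite -[X in X <= _]mul1r; apply: ler_wpM2r => //.
  by apply: mulr_ge0 => //; exact: ltW e1_gt0.
move: H'; rewrite /e1 => H'; nra.
Qed.


Lemma c_ge : 1 - eps / 4 <= N P1.
Proof. have := NP1D; have := ND_bound; lra. Qed.
Lemma c_pos : 0 < N P1.
Proof. have := c_ge; case/andP: heps => ? ?; lra. Qed.

Definition ci := (N P1)^-1.
Lemma ci_c : ci * N P1 = 1.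
Proof. by rewrite /ci mulVf // gt_eqF // c_pos. Qed.
Lemma ci_ge1 : 1 <= ci.
Proof. have := ci_c; have := c_pos; have := NP1_le => ? ? ?; nra. Qed.

Definition Top f w := ci * (jB w * S (fun t => f t * ip t) w +
  (1 - jB w) * S (fun t => f t * im t) w).

Lemma Top_Y f : Linf mu f -> Y (Top f).
Proof.
move=> hf; apply: (Y_scal hY ci).
exact: (Y_add hY (Y_mulb hY jB_meas jB_b (SY (Linf_mul hf ip_meas ip_b)))
  (Y_mulb hY jBc_meas jBc_b (SY (Linf_mul hf im_meas im_b)))).
Qed.

Lemma Top_comp f f' : Linf mu f -> Linf mu f' -> Defs.ae_eq mu f f' ->
  Defs.ae_eq nu (Top f) (Top f').
Proof.
move=> hf hf' H.
have Hp : Defs.ae_eq nu (S (fun t => f t * ip t)) (S (fun t => f' t * ip t)).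
  apply: Scomp; [exact: Linf_mul hf ip_meas ip_b|exact: Linf_mul hf' ip_meas ip_b|].
  by apply: filterS H => t ->.
have Hm : Defs.ae_eq nu (S (fun t => f t * im t)) (S (fun t => f' t * im t)).
  apply: Scomp; [exact: Linf_mul hf im_meas im_b|exact: Linf_mul hf' im_meas im_b|].
  by apply: filterS H => t ->.
by apply: filterS (aeI Hp Hm) => w [e1' e2']; rewrite /Top e1' e2'.
Qed.

Lemma Top_lin (a : R) f f' : Linf mu f -> Linf mu f' ->
  Defs.ae_eq nu (Top (fun t => a * f t + f' t)) (fun w => a * Top f w + Top f' w).
Proof.
move=> hf hf'.
have Hp := Slin a (Linf_mul hf ip_meas ip_b) (Linf_mul hf' ip_meas ip_b).
have Hm := Slin a (Linf_mul hf im_meas im_b) (Linf_mul hf' im_meas im_b).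
rewrite /Top.
rewrite (@Sx (fun t => (a * f t + f' t) * ip t) (fun t => a * (f t * ip t) + f' t * ip t)); last by move=> t; ring.
rewrite (@Sx (fun t => (a * f t + f' t) * im t) (fun t => a * (f t * im t) + f' t * im t)); last by move=> t; ring.
by apply: filterS (aeI Hp Hm) => w [-> ->]; ring.
Qed.

Lemma Top_pos : positive_op mu nu Top.
Proof.
move=> f hf H.
have Hp : ae_le nu (fun _ => 0) (S (fun t => f t * ip t)).
  apply: Spos; first exact: Linf_mul hf ip_meas ip_b.
  by apply: filterS H => t e; apply: mulr_ge0 e (ip_ge0 t).
have Hm : ae_le nu (fun _ => 0) (S (fun t => f t * im t)).
  apply: Spos; first exact: Linf_mul hf im_meas im_b.
  by apply: filterS H => t e; apply: mulr_ge0 e (im_ge0 t).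
apply: filterS (aeI Hp Hm) => w [p m]; rewrite /Top.
have := ci_ge1 => ?.
apply: mulr_ge0; first lra.
by case: (jB_cases w) => [[-> _]|[-> _]]; rewrite ?subrr ?subr0 ?mul0r ?mul1r ?add0r ?addr0.
Qed.

Lemma Top1 : Top (fun _ => 1) = (fun w => ci * P1 w).
Proof.
apply: funext => w; rewrite /Top /P1.
rewrite (@Sx (fun t => 1 * ip t) ip); last by move=> t; rewrite mul1r.
by rewrite (@Sx (fun t => 1 * im t) im); last by move=> t; rewrite mul1r.
Qed.

Lemma NTop1 : N (Top (fun _ => 1)) = 1.
Proof.
rewrite Top1 (N_scal hY _ YP1) ger0_norm ?ci_c //.
have := ci_ge1; lra.
Qed.

Lemma Top_bounded : bounded_op mu nu Y N Top.
Proof.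
split.
- exact: Top_Y.
- exact: Top_comp.
- exact: Top_lin.
- exists (N (Top (fun _ => 1))) => f hf; rewrite mulrC.
  exact: (S_bound hY Top_Y Top_lin Top_pos hf).
Qed.

Lemma Top_norm : op_norm mu N Top = 1.
Proof. by rewrite (op_norm_pos hY Top_Y Top_lin Top_pos) NTop1. Qed.


Definition u0 t := ip t - im t + x0 t * iz t.

Lemma u0_meas : measurable_fun setT u0.
Proof.
exact: (measurable_funD (measurable_funB ip_meas im_meas)
  (measurable_funM (Linf_meas hx0) iz_meas)).
Qed.

Lemma u0_b : \forall t \ae mu, `|u0 t| <= 1 /\ `|x0 t| <= `|u0 t| /\ `|u0 t - x0 t| <= e1.
Proof.
apply: filterS x0_b => t hb; move/ler_normlP: (hb) => [? ?].
have := e1_gt0; have := e1_lt; rewrite /u0.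
case: (i_cases t) => [[E1 E2 E3 ?]|[[E1 E2 E3 ?]|[E1 E2 E3 /andP[? ?]]]] => ? ?;
  rewrite ?E1 ?E2 ?E3 ?mulr1 ?mulr0.
- rewrite subr0 addr0 normr1; split => //; split => //.
  by rewrite ler_norml; apply/andP; split; lra.
- rewrite sub0r addr0 normrN normr1; split => //; split => //.
  by rewrite ler_norml; apply/andP; split; lra.
- rewrite subr0 add0r subrr normr0; split; last split => //.
    by apply: le_trans hb.
  exact: ltW e1_gt0.
Qed.

Lemma Lu0 : Linf mu u0.
Proof. by apply: (Linf_intro (c := 1)); [exact: u0_meas|apply: filterS u0_b => t []]. Qed.

Lemma nu0 : linf_norm mu u0 = 1.
Proof.
have E1 : ess_sup mu (fun t => (`|x0 t|)%:E) = 1%:E.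
  move: nx0; rewrite /linf_norm.
  by case: ess_sup => [r /= -> //| /= /esym/eqP| /= /esym/eqP]; rewrite oner_eq0.
have le1 : (ess_sup mu (fun t => (`|u0 t|)%:E) <= 1%:E)%E.
  by apply/ess_supP; apply: filterS u0_b => t [h _]; rewrite lee_fin.
have ge1 : (ess_sup mu (fun t => (`|x0 t|)%:E) <= ess_sup mu (fun t => (`|u0 t|)%:E))%E.
  by apply: le_ess_sup; apply: filterS u0_b => t [_ [h _]]; rewrite lee_fin.
rewrite E1 in ge1; rewrite /linf_norm.
have -> : ess_sup mu (fun t => (`|u0 t|)%:E) = 1%:E by apply: le_anti; rewrite le1 ge1.
by [].
Qed.

Lemma u0_close : linf_norm mu (fun t => u0 t - x0 t) < eps.
Proof.
apply: (le_lt_trans (linf_le _ _)); first exact: ltW e1_gt0.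
  by apply: filterS u0_b => t [_ [_ h]].
exact: e1_lt_eps.
Qed.

Lemma Top_u0 : N (Top u0) = 1.
Proof.
have Hm := S_scale Slin (-1) Lim.
have hu := Linf_mul Lu0 ip_meas ip_b.
rewrite -(N_abs hY (Top_Y Lu0)).
rewrite (N_eq hY (Y_abs hY (Top_Y Lu0)) (Y_scal hY ci YP1)).
  by rewrite (N_scal hY _ YP1) ger0_norm ?ci_c //; have := ci_ge1; lra.
rewrite /Top.
rewrite (@Sx (fun t => u0 t * ip t) ip); last first.
  move=> t; rewrite /u0; have := e1_lt; have := e1_gt0.
  by case: (i_cases t) => [[E1 E2 E3 ?]|[[E1 E2 E3 ?]|[E1 E2 E3 /andP[? ?]]]] => ? ?;
    rewrite ?E1 ?E2 ?E3; ring.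
rewrite (@Sx (fun t => u0 t * im t) (fun t => -1 * im t)); last first.
  move=> t; rewrite /u0; have := e1_lt; have := e1_gt0.
  by case: (i_cases t) => [[E1 E2 E3 ?]|[[E1 E2 E3 ?]|[E1 E2 E3 /andP[? ?]]]] => ? ?;
    rewrite ?E1 ?E2 ?E3; ring.
apply: filterS (aeI Hm pos3) => w [-> [p m _]].
rewrite /P1 -/sp -/sm; have := ci_ge1 => ?.
case: (jB_cases w) => [[-> _]|[-> _]].
- rewrite subrr !mul0r addr0 mul1r normrM !ger0_norm //; lra.
- rewrite subr0 !mul0r add0r !mul1r mulN1r mulrN normrN normrM !ger0_norm //; lra.
Qed.

Lemma diff_bound f : Linf mu f -> linf_norm mu f <= 1 ->
  N (fun w => Top f w - S f w) <= eps / 2.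
Proof.
move=> hf lf.
have fb : \forall t \ae mu, `|f t| <= 1.
  by apply: filterS (linf_ae hf) => t h; apply: le_trans lf.
have Bnd h : Linf mu h -> (forall t, 0 <= h t) -> (forall t, `|h t| <= 1) ->
    \forall w \ae nu, `|S (fun t => f t * h t) w| <= S h w.
  move=> Lh h0 h1; apply: (S_abs Slin Spos (Linf_mul hf (Linf_meas Lh) h1) Lh).
  apply: filterS fb => t ft; rewrite normrM (ger0_norm (h0 t)).
  by rewrite -[X in _ <= X]mul1r; apply: ler_wpM2r.
have Bp := Bnd _ Lip ip_ge0 ip_b.
have Bm := Bnd _ Lim im_ge0 im_b.
have Bz := Bnd _ Liz iz_ge0 iz_b.
have YR := Y_add hY (Y_scal hY (ci - 1) YP1) YD.
have ci1 := ci_ge1.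
apply: (@le_trans _ _ (N (fun w => (ci - 1) * P1 w + D w))).
  apply: (N_mono' hY _ YR).
    exact: (measurable_funB (Y_meas hY (Top_Y hf)) (Y_meas hY (SY hf))).
  apply: filterS (aeI (decomp hf) (aeI Bp (aeI Bm (aeI Bz key)))).
  move=> w [-> [p [m [z [k1 k2 k3 k4]]]]].
  move: p m z; rewrite /Top /P1 /D -/sp -/sm -/sz.
  move=> /ler_normlP [p1 p2] /ler_normlP [m1 m2] /ler_normlP [z1 z2].
  have P1p := k3; rewrite /P1 -/sp -/sm in P1p.
  rewrite [X in _ <= X]ger0_norm; last first.
    by apply: addr_ge0 => //; apply: mulr_ge0 => //; lra.
  case: (jB_cases w) => [[Ej _]|[Ej _]]; rewrite Ej in P1p *;
    rewrite ler_norml; apply/andP; split; nra.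
apply: (le_trans (N_tri hY (Y_scal hY (ci - 1) YP1) YD)).
rewrite (N_scal hY _ YP1) ger0_norm; last lra.
have := ci_c; have := ND_bound; have := NP1D => ? ? ?.
nra.
Qed.

Lemma op_diff : op_norm mu N (fun f w => Top f w - S f w) < eps.
Proof.
apply: (@le_lt_trans _ _ (eps / 2)); last by case/andP: heps => ? ?; lra.
apply: ge_sup.
  exists (N (fun w => Top (fun _ => 1) w - S (fun _ => 1) w)).
  exists (fun _ => 1) => //; split; first exact: Linf_cst.
  by apply: linf_le => //; apply: aeW => t; rewrite normr1.
by move=> _ [f [hf lf] <-]; exact: diff_bound.
Qed.

End Main.

Theorem theorem2p5 (R : realType) (delta : R -> R)
  (hdelta : forall e : R, 0 < e -> 0 < delta e) :
  exists eta : R -> R,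
    (forall eps : R, 0 < eps < 1 -> 0 < eta eps < eps) /\
    forall (d : measure_display) (T : measurableType d)
           (mu : {measure set T -> \bar R})
           (d' : measure_display) (Om : measurableType d')
           (nu : {measure set Om -> \bar R})
           (Y : set (Om -> R)) (N : (Om -> R) -> R),
      banach_function_space nu Y N ->
      unif_monotone_with nu Y N delta ->
      BPBp_pos_with mu nu Y N eta.
Proof.
exists (eta_of delta); split.
  move=> eps /andP [e0 e1'].
  have e2p : 0 < eps ^+ 2 / 8 by apply: divr_gt0 => //; apply: exprn_gt0.
  have hd := hdelta _ e2p.
  apply/andP; split.
    rewrite /eta_of lt_min; apply/andP; split; first by apply: divr_gt0.
    by apply: divr_gt0 => //; apply: addr_gt0.
  apply: (@le_lt_trans _ _ (eps / 2)); first by rewrite /eta_of ge_min lexx.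
  lra.
move=> d T mu d' Om nu Y N hY hUM eps heps S x0 hS Spos hnorm hx0 nx0 hSx0.
case: hS => SY Scomp Slin _.
have e2p : 0 < eps ^+ 2 / 8.
  by case/andP: heps => ? ?; apply: divr_gt0 => //; apply: exprn_gt0.
have hdel := hdelta _ e2p.
exists (u0 eps x0), (Top N eps S x0); split; split.
- exact: (Lu0 heps hx0).
- exact: (nu0 heps hx0 nx0).
- by apply: (Top_bounded hY hUM).
- by apply: (Top_pos hY hUM).
- by apply: (Top_norm hY hUM).
- by apply: (Top_u0 (mu := mu) hY hUM).
- exact: (u0_close heps hx0 nx0).
- by apply: (op_diff hY hUM).
Qed.
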